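(* Let $J$ be a set and $\mathcal{G}^{*J}=*_{\alpha\in J}\mathcal{G}(\alpha)$ the levelwise free product of copies of the simplicial group $\mathcal{G}$. Then for each $n\geq1$: (1) $N_n\mathcal{G}^{*J}=R[\{2,3,\dots,n+1\}]$; (2) $\mathcal{Z}_n\mathcal{G}^{*J}=R[\{1,2,\dots,n+1\}]$; (3) $\mathcal{B}_n\mathcal{G}^{*J}=\mathcal{Z}_n\mathcal{G}^{*J}=R[\{1,2,\dots,n+1\}]$.
   Context: For a simplicial group $G$: Moore chains $N_nG=\bigcap_{i=1}^n\mathrm{Ker}(d_i\colon G_n\to G_{n-1})$, Moore cycles $\mathcal{Z}_nG=\bigcap_{i=0}^n\mathrm{Ker}(d_i)$, Moore boundaries $\mathcal{B}_nG=d_0(N_{n+1}G)$. $\mathcal{G}$ is the simplicial group with $\mathcal{G}_n$ the free group on letters $x_{i,j}$, $1\leq i<j\leq n+1$, faces $d_t(x_{i,j})=x_{i-1,j-1}$ if $t+1<i$, $=1$ if $t+1\in\{i,j\}$, $=x_{i,j-1}$ if $i<t+1<j$, $=x_{i,j}$ if $t+1>j$, and degeneracies $s_t(x_{i,j})=x_{i+1,j+1}$ if $t+1<i$, $=x_{i,j+1}x_{i+1,j+1}$ if $t+1=i$, $=x_{i,j+1}$ if $i<t+1<j$, $=x_{i,j}x_{i,j+1}$ if $t+1=j$, $=x_{i,j}$ if $t+1>j$ ($0\leq t\leq n$). In $\mathcal{G}^{*J}_n$ write $x_{i,j}(\alpha)$ for the letter $x_{i,j}$ of the copy indexed by $\alpha\in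 J$, and let $R_{i,j}$ be the normal closure of $\{x_{i,j}(\alpha)\mid\alpha\in J\}$ in $\mathcal{G}^{*J}_n$. For $T\subseteq\{1,\dots,n+1\}$, $R[T]$ is the product of all iterated commutator subgroups $[[\dots[R_{i_1,j_1},R_{i_2,j_2}],\dots],R_{i_t,j_t}]$, $t\geq1$, over sequences of pairs $1\leq i_s<j_s\leq n+1$ with $T\subseteq\{i_1,j_1,\dots,i_t,j_t\}$ (for $t=1$ the subgroup is $R_{i_1,j_1}$). *)

(* Defs.v *)
(* Free groups are encoded as words modulo free
   equivalence. *)
From mathcomp Require Import all_boot.
Set Implicit Arguments. Unset Strict Implicit. Unset Printing Implicit Defensive.

Section FreeSimplicial.
Variable J : Type.

(* letter x_{i,j}(alpha) *)
Definition letter := (nat * nat * J)%type.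
(* a word: sequence of (exponent sign, letter); true = +1, false = -1 *)
Definition word := seq (bool * letter).

Definition winv (w : word) : word := rev (map (fun p => (~~ p.1, p.2)) w).

Inductive freq : word -> word -> Prop :=
| freq_refl w : freq w w
| freq_sym u v : freq u v -> freq v u
| freq_trans u v w : freq u v -> freq v w -> freq u w
| freq_cancel u v b x : freq (u ++ (b, x) :: (~~ b, x) :: v) (u ++ v).

(* letters of G^{*J}_n : 1 <= i < j <= n+1 *)
Definition valid_pair (n : nat) (q : nat * nat) : bool :=
  (1 <= q.1) && (q.1 < q.2) && (q.2 <= n.+1).
Definition wf_letter (n : nat) (x : letter) : bool := valid_pair n (x.1.1, x.1.2).
Definition level (n : nat) (w : word) : bool := all (fun p => wf_letter n p.2) w.

(* face map d_t on a letter (None means the identity element) *)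
Definition face_letter (t : nat) (x : letter) : option letter :=
  let: (i, j, a) := x in
  if t.+1 < i then Some (i.-1, j.-1, a)
  else if (t.+1 == i) || (t.+1 == j) then None
  else if t.+1 < j then Some (i, j.-1, a)
  else Some (i, j, a).

Definition face (t : nat) (w : word) : word :=
  pmap (fun p => omap (fun y => (p.1, y)) (face_letter t p.2)) w.

Inductive gen (S : word -> Prop) : word -> Prop :=
| gen_nil : gen S [::]
| gen_in w : S w -> gen S w
| gen_mul u v : gen S u -> gen S v -> gen S (u ++ v)
| gen_inv u : gen S u -> gen S (winv u)
| gen_eq u v : gen S u -> freq u v -> gen S v.

(* R_{i,j}: normal closure in G^{*J}_n of {x_{i,j}(alpha) | alpha in J} *)
Definition Rgen (n i j : nat) : word -> Prop :=
  gen (fun w => exists (g : word) (a : J),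
         level n g /\ w = winv g ++ (true, (i, j, a)) :: g).

Definition comm (H K : word -> Prop) : word -> Prop :=
  gen (fun w => exists h k, H h /\ K k /\ w = winv h ++ winv k ++ h ++ k).

Definition iterC (n : nat) (p : nat * nat) (s : seq (nat * nat)) : word -> Prop :=
  foldl (fun H q => comm H (Rgen n q.1 q.2)) (Rgen n p.1 p.2) s.

Definition RT (n : nat) (T : seq nat) : word -> Prop :=
  gen (fun w => exists (p : nat * nat) (s : seq (nat * nat)),
         all (valid_pair n) (p :: s) /\
         {subset T <= flatten [seq [:: q.1; q.2] | q <- p :: s]} /\
         iterC n p s w).

Definition MooreN (n : nat) (w : word) : Prop :=
  level n w /\ forall i, 1 <= i <= n -> freq (face i w) [::].
Definition MooreZ (n : nat) (w : word) : Prop :=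
  level n w /\ forall i, i <= n -> freq (face i w) [::].
Definition MooreB (n : nat) (w : word) : Prop :=
  level n w /\ exists u, MooreN n.+1 u /\ freq (face 0 u) w.

End FreeSimplicial.

(* Main.v *)
Require Import Defs.
From mathcomp Require Import all_boot zify.
From Stdlib Require Import Setoid Morphisms Lia.
Set Implicit Arguments. Unset Strict Implicit. Unset Printing Implicit Defensive.

Section FG.
Variable J : Type.
Local Notation word := (word J).

Lemma freq_refl' (u : word) : freq u u. Proof. exact: freq_refl. Qed.
Lemma freq_sym' (u v : word) : freq u v -> freq v u. Proof. exact: freq_sym. Qed.
Lemma freq_trans' (u v w : word) : freq u v -> freq v w -> freq u w. Proof. exact: freq_trans. Qed.

Hint Resolve freq_refl' : core.

Global Instance freq_Equiv : Equivalence (@freq J).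
Proof. split; [exact: freq_refl' | exact: freq_sym' | exact: freq_trans']. Qed.

Lemma freq_ctx (u v a b : word) : freq u v -> freq (a ++ u ++ b) (a ++ v ++ b).
Proof.
elim=> {u v} [w|u v _ IH|u v w _ IH1 _ IH2|u v c x].
- reflexivity.
- by symmetry.
- by rewrite IH1.
- have := freq_cancel (a ++ u) (v ++ b) c x.
  by rewrite -!catA /=.
Qed.

Global Instance cat_Proper : Proper (@freq J ==> @freq J ==> @freq J) cat.
Proof.
intros u u' Hu v v' Hv.
transitivity (u' ++ v).
  by have := freq_ctx [::] v Hu; rewrite /=.
by have := freq_ctx u' [::] Hv; rewrite !cats0.
Qed.

Global Instance cons_Proper p : Proper (@freq J ==> @freq J) (cons p).
Proof. intros u v H. by have := freq_ctx [:: p] [::] H; rewrite !cats0. Qed.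

Lemma winv_cat (u v : word) : winv (u ++ v) = winv v ++ winv u.
Proof. by rewrite /winv map_cat rev_cat. Qed.

Lemma winvK (u : word) : winv (winv u) = u.
Proof.
rewrite /winv map_rev revK -map_comp -[RHS]map_id.
by apply: eq_map => -[b x] /=; rewrite negbK.
Qed.

Lemma winv_cons b x (u : word) : winv ((b, x) :: u) = winv u ++ [:: (~~ b, x)].
Proof. by rewrite /winv /= rev_cons cats1. Qed.

Lemma winv_nil : winv ([::] : word) = [::]. Proof. by []. Qed.

Global Instance winv_Proper : Proper (@freq J ==> @freq J) (@winv J).
Proof.
intros u v H; elim: H => {u v} [w|u v _ IH|u v w _ IH1 _ IH2|u v c x].
- reflexivity.
- by symmetry.
- by rewrite IH1.
- rewrite !winv_cat !winv_cons negbK -!catA /=.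
  exact: (freq_cancel _ (winv u) c x).
Qed.

Lemma cat_winv (u : word) : freq (u ++ winv u) [::].
Proof.
elim: u => [|[b x] u IH]; first reflexivity; rewrite winv_cons /= catA.
rewrite IH /=. have := freq_cancel [::] [::] b x. by [].
Qed.

Lemma winv_cat_l (u : word) : freq (winv u ++ u) [::].
Proof. by have := cat_winv (winv u); rewrite winvK. Qed.

Inductive fexp := FV of nat | FI of fexp | FA of fexp & fexp | FN.

Fixpoint interp (env : seq word) (e : fexp) : word :=
  match e with
  | FV i => nth [::] env i
  | FI e => winv (interp env e)
  | FA e1 e2 => interp env e1 ++ interp env e2
  | FN => [::]
  end.

Fixpoint fl (e : fexp) : seq (bool * nat) :=
  match e with
  | FV i => [:: (true, i)]
  | FI e => rev (map (fun p => (~~ p.1, p.2)) (fl e))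
  | FA e1 e2 => fl e1 ++ fl e2
  | FN => [::]
  end.

Definition atom (env : seq word) (p : bool * nat) : word :=
  if p.1 then nth [::] env p.2 else winv (nth [::] env p.2).

Definition il env (s : seq (bool * nat)) : word := flatten (map (atom env) s).

Definition redstep (p : bool * nat) (acc : seq (bool * nat)) :=
  match acc with
  | q :: acc' => if (q.2 == p.2) && (q.1 == ~~ p.1) then acc' else p :: acc
  | [::] => [:: p]
  end.
Definition red (s : seq (bool * nat)) := foldr redstep [::] s.

Lemma il_cat env s t : il env (s ++ t) = il env s ++ il env t.
Proof. by rewrite /il map_cat flatten_cat. Qed.

Lemma il_inv env s : il env (rev (map (fun p => (~~ p.1, p.2)) s)) = winv (il env s).
Proof.
elim: s => [//|[b i] s IH] /=.
rewrite rev_cons -cats1 il_cat IH.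
have -> : forall q, il env [:: q] = atom env q by move=> q; rewrite /il /= cats0.
rewrite [il env (_ :: s)]/il /= -/(il env s) winv_cat.
by rewrite /atom /=; case: b => //=; rewrite winvK.
Qed.

Lemma interp_fl env e : interp env e = il env (fl e).
Proof.
elim: e => [i|e IH|e1 IH1 e2 IH2|] //=.
- by rewrite /il /= cats0.
- by rewrite IH il_inv.
- by rewrite il_cat IH1 IH2.
Qed.

Lemma il_red env s : freq (il env s) (il env (red s)).
Proof.
elim: s => [|p s IH]; first reflexivity. rewrite /=.
rewrite [il env (p :: s)]/il /= -/(il env s) IH.
case: (red s) => [|q t] /=; first by rewrite /il /=; reflexivity.
case: ifP => [/andP [/eqP e2 /eqP e1]|_]; last by rewrite /il; reflexivity.
rewrite /il /= catA.
move: e1 e2; case: p => [b i]; case: q => [c k] /= -> ->.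
rewrite /atom /=; case: b => /=.
- by rewrite cat_winv; reflexivity.
- by rewrite winv_cat_l; reflexivity.
Qed.

Lemma fnorm_sound env e1 e2 : red (fl e1) = red (fl e2) -> freq (interp env e1) (interp env e2).
Proof. move=> H; rewrite !interp_fl (il_red env (fl e1)) (il_red env (fl e2)) H; reflexivity. Qed.

End FG.
#[global] Hint Resolve freq_refl' : core.

Ltac lookup x env :=
  match env with
  | x :: _ => constr:(0)
  | _ :: ?e => let k := lookup x e in constr:(S k)
  end.
Ltac reify env t :=
  match t with
  | cat ?a ?b => let ea := reify env a in let eb := reify env b in constr:(FA ea eb)
  | winv ?a => let ea := reify env a in constr:(FI ea)
  | [::] => constr:(FN)
  | _ => let k := lookup t env in constr:(FV k)
  end.
Ltac fgroup env :=
  match goal with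
  | |- freq ?L ?R =>
    let eL := reify env L in let eR := reify env R in
    change (freq (interp env eL) (interp env eR));
    apply: fnorm_sound; vm_compute; reflexivity
  end.

Section Test.
Variable J : Type.
Lemma hw (x y z : word J) :
  let c a b := winv a ++ winv b ++ a ++ b in
  let cj a g := winv g ++ a ++ g in
  freq (cj (c (c x (winv y)) z) y ++ cj (c (c y (winv z)) x) z ++ cj (c (c z (winv x)) y) x) [::].
Proof. move=> c cj; rewrite /c /cj. fgroup [:: x; y; z]. Qed.
End Test.

Section Lift.
Variable J : Type.
Local Notation word := (word J).
Local Notation letter := (letter J).

Definition wlift (f : letter -> option letter) (w : word) : word :=
  pmap (fun p => omap (fun y => (p.1, y)) (f p.2)) w.

Lemma lift_cat f (u v : word) : wlift f (u ++ v) = wlift f u ++ wlift f v.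
Proof. by rewrite /wlift pmap_cat. Qed.

Lemma lift_cons f b x (u : word) :
  wlift f ((b, x) :: u) = match f x with Some y => (b, y) :: wlift f u | None => wlift f u end.
Proof. by rewrite /wlift /=; case: (f x). Qed.

Lemma lift_winv f (u : word) : wlift f (winv u) = winv (wlift f u).
Proof.
elim: u => [//|[b x] u IH].
rewrite winv_cons lift_cat IH !lift_cons.
case: (f x) => [y|]; last by rewrite cats0.
by rewrite winv_cons.
Qed.

Global Instance lift_Proper f : Proper (@freq J ==> @freq J) (wlift f).
Proof.
intros u v H; elim: H => {u v} [w|u v _ IH|u v w _ IH1 _ IH2|u v c x].
- reflexivity.
- by symmetry.
- by rewrite IH1.
- rewrite !lift_cat !lift_cons; case: (f x) => [y|]; last reflexivity.
  exact: freq_cancel.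
Qed.

Lemma lift_comp f g (w : word) :
  wlift f (wlift g w) = wlift (fun x => obind f (g x)) w.
Proof.
elim: w => [//|[b x] w IH]; rewrite !lift_cons; case: (g x) => [y|]; last by rewrite IH.
by rewrite lift_cons IH /=; case: (f y).
Qed.

Lemma eq_lift (P : pred letter) f g (w : word) :
  (forall x, P x -> f x = g x) -> all (fun p => P p.2) w -> wlift f w = wlift g w.
Proof.
move=> H; elim: w => [//|[b x] w IH] Hw; case/andP: Hw => Px Hw.
by rewrite !lift_cons H // IH.
Qed.

Lemma lift_Some (w : word) : wlift Some w = w.
Proof. by elim: w => [//|[b x] w IH]; rewrite lift_cons IH. Qed.

Lemma face_lift t (w : word) : face t w = wlift (@face_letter J t) w.
Proof. by []. Qed.

Lemma all_cat' (P : pred letter) (u v : word) :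
  all (fun p => P p.2) (u ++ v) = all (fun p => P p.2) u && all (fun p => P p.2) v.
Proof. exact: all_cat. Qed.

Lemma all_winv (P : pred letter) (u : word) :
  all (fun p => P p.2) (winv u) = all (fun p => P p.2) u.
Proof. by rewrite /winv all_rev all_map. Qed.

Lemma all_lift (P Q : pred letter) f (u : word) :
  (forall x y, P x -> f x = Some y -> Q y) ->
  all (fun p => P p.2) u -> all (fun p => Q p.2) (wlift f u).
Proof.
move=> H; elim: u => [//|[b x] u IH] Hu; case/andP: Hu => Px Hu.
rewrite lift_cons; case E: (f x) => [y|]; last exact: IH.
by rewrite /= (H _ _ Px E) IH.
Qed.

End Lift.
Arguments wlift {J} f w.

Section Letters.
Variable J : Type.
Local Notation word := (word J).
Local Notation letter := (letter J).

Definition touch (m : nat) (q : nat * nat) := (q.1 == m) || (q.2 == m).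
Definition kill (m : nat) (x : letter) : option letter :=
  if touch m (x.1.1, x.1.2) then None else Some x.
Definition K m (w : word) := wlift (kill m) w.
Definition shl (x : letter) : letter := (x.1.1.+1, x.1.2.+1, x.2).
Definition bump t v := if t.+1 <= v then v.+1 else v.
Definition unrel t (x : letter) : option letter := Some (bump t x.1.1, bump t x.1.2, x.2).

Ltac crush := repeat (case: ifP => /= ?); try (exfalso; lia); try reflexivity;
  try (congr (Some (_, _, _)); lia).

Lemma La t (x : letter) : x.1.1 < x.1.2 ->
  obind (face_letter t) (kill t.+1 x) = face_letter t x.
Proof. case: x => [[i j] a] /= lt; rewrite /kill /touch /face_letter /=; crush. Qed.

Lemma Lb t (x : letter) : x.1.1 < x.1.2 ->
  obind (unrel t) (face_letter t x) = kill t.+1 x.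
Proof. case: x => [[i j] a] /= lt; rewrite /kill /touch /= /face_letter /unrel /bump; crush. Qed.

Lemma Lc (x : letter) : 1 <= x.1.1 -> face_letter 0 (shl x) = Some x.
Proof. case: x => [[i j] a] /= h; rewrite /face_letter /shl /=; crush. Qed.

Lemma Ld s (x : letter) : x.1.1 < x.1.2 -> face_letter s.+1 (shl x) = omap shl (face_letter s x).
Proof. case: x => [[i j] a] /= lt; rewrite /face_letter /shl /=; crush. Qed.

Lemma Le t (x : letter) : 1 <= x.1.1 < x.1.2 ->
  obind (face_letter t) (face_letter 0 x) = obind (face_letter 0) (face_letter t.+1 x).
Proof. case: x => [[i j] a] /= /andP [h0 h1]; rewrite /face_letter; crush. Qed.

Lemma wf_shl n (x : letter) : wf_letter n x -> wf_letter n.+1 (shl x).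
Proof. by case: x => [[i j] a]; rewrite /wf_letter /valid_pair /shl /=; lia. Qed.

End Letters.
Arguments kill {J} m x.
Arguments K {J} m w.
Arguments shl {J} x.
Arguments unrel {J} t x.

Section Moore.
Variable J : Type.
Local Notation word := (word J).
Local Notation letter := (letter J).

Lemma level_cat n (u v : word) : level n (u ++ v) = level n u && level n v.
Proof. exact: all_cat. Qed.
Lemma level_winv n (u : word) : level n (winv u) = level n u.
Proof. exact: all_winv. Qed.

Lemma level_K n m (w : word) : level n w -> level n (K m w).
Proof. apply: all_lift => x y Hx; rewrite /kill; case: ifP => // _ [<-] //. Qed.

Definition SH (w : word) := wlift (fun x => Some (shl x)) w.

Lemma level_SH n (w : word) : level n w -> level n.+1 (SH w).
Proof. apply: all_lift => x y Hx [<-]; exact: wf_shl. Qed.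

Lemma wf_lt n (x : letter) : wf_letter n x -> x.1.1 < x.1.2.
Proof. by case: x => [[i j] a]; rewrite /wf_letter /valid_pair /=; lia. Qed.

Lemma face_K n t (w : word) : level n w -> face t (K t.+1 w) = face t w.
Proof.
move=> Hw; rewrite /K face_lift lift_comp.
apply: (eq_lift (P := wf_letter n)) Hw => x Hx; apply: La; exact: wf_lt Hx.
Qed.

Lemma unrel_face n t (w : word) : level n w -> wlift (unrel t) (face t w) = K t.+1 w.
Proof.
move=> Hw; rewrite face_lift lift_comp.
apply: (eq_lift (P := wf_letter n)) Hw => x Hx; apply: Lb; exact: wf_lt Hx.
Qed.

Lemma faceZ_iff n t (w : word) : level n w ->
  freq (face t w) [::] <-> freq (K t.+1 w) [::].
Proof.
move=> Hw; split => H.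
- rewrite -(unrel_face t Hw) H; reflexivity.
- rewrite -(face_K t Hw) H; reflexivity.
Qed.

Lemma MooreN_iff n (w : word) : level n w ->
  (MooreN n w <-> forall k, k \in iota 2 n -> freq (K k w) [::]).
Proof.
move=> Hw; rewrite /MooreN; split.
- case=> _ H k; rewrite mem_iota => Hk.
  have -> : k = k.-1.+1 by lia.
  apply/(faceZ_iff _ Hw); apply: H; lia.
- move=> H; split => // i Hi; apply/(faceZ_iff _ Hw); apply: H; rewrite mem_iota; lia.
Qed.

Lemma MooreZ_iff n (w : word) : level n w ->
  (MooreZ n w <-> forall k, k \in iota 1 n.+1 -> freq (K k w) [::]).
Proof.
move=> Hw; rewrite /MooreZ; split.
- case=> _ H k; rewrite mem_iota => Hk.
  have -> : k = k.-1.+1 by lia.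
  apply/(faceZ_iff _ Hw); apply: H; lia.
- move=> H; split => // i Hi; apply/(faceZ_iff _ Hw); apply: H; rewrite mem_iota; lia.
Qed.

Lemma face0_SH n (w : word) : level n w -> face 0 (SH w) = w.
Proof.
move=> Hw; rewrite face_lift /SH lift_comp -[RHS]lift_Some.
apply: (eq_lift (P := wf_letter n)) Hw => x Hx /=; apply: Lc.
by move: Hx; case: x => [[i j] a]; rewrite /wf_letter /valid_pair /=; lia.
Qed.

Lemma faceS_SH n s (w : word) : level n w -> face s.+1 (SH w) = SH (face s w).
Proof.
move=> Hw; rewrite !face_lift /SH !lift_comp.
apply: (eq_lift (P := wf_letter n)) Hw => x Hx.
transitivity (omap shl (face_letter s x)); first exact: Ld (wf_lt Hx).
by case: (face_letter s x).
Qed.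

Lemma face_face0 n t (w : word) : level n w ->
  face t (face 0 w) = face 0 (face t.+1 w).
Proof.
move=> Hw; rewrite !face_lift !lift_comp.
apply: (eq_lift (P := wf_letter n)) Hw => x Hx /=; apply: Le.
by move: Hx; case: x => [[i j] a]; rewrite /wf_letter /valid_pair /=; lia.
Qed.

Lemma level_face0 n (u : word) : level n.+1 u -> level n (face 0 u).
Proof.
rewrite face_lift; apply: all_lift => x y; case: x => [[i j] a].
rewrite /wf_letter /valid_pair /face_letter /=.
case: ifP => h1; first by move=> H [<-] /=; lia.
case: ifP => h2 //; case: ifP => h3 => H [<-] /=; lia.
Qed.

Lemma MooreB_iff n (w : word) : level n w -> (MooreB n w <-> MooreZ n w).
Proof.
move=> Hw; split.
- case=> _ [u [[Hu Hn] Hf]]; split => // i Hi.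
  rewrite -Hf (face_face0 _ Hu) (Hn i.+1); last lia. reflexivity.
- case=> _ Hz; split => //; exists (SH w); split; last by rewrite (face0_SH Hw); reflexivity.
  split; first exact: level_SH.
  move=> i Hi; have -> : i = i.-1.+1 by lia.
  rewrite (faceS_SH _ Hw) (Hz i.-1); last lia. reflexivity.
Qed.

End Moore.

Section Sub.
Variable J : Type.
Local Notation word := (word J).
Local Notation letter := (letter J).
Variable n : nat.

Definition lv (g : word) := exists g', level n g' /\ freq g g'.
Definition cm (a b : word) := winv a ++ winv b ++ a ++ b.
Definition cj (u g : word) := winv g ++ u ++ g.

Record NSG (P : word -> Prop) : Prop := {
  sg_nil : P [::];
  sg_cat : forall u v, P u -> P v -> P (u ++ v);
  sg_inv : forall u, P u -> P (winv u);
  sg_eq : forall u v, P u -> freq u v -> P v;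
  sg_conj : forall u g, P u -> level n g -> P (cj u g) }.

Lemma sg_conj_lv P u g : NSG P -> P u -> lv g -> P (cj u g).
Proof.
move=> HP Pu [g' [Hg' Hgg']]; apply: (sg_eq HP (sg_conj HP Pu Hg')).
by rewrite /cj Hgg'.
Qed.

Lemma sg_freq P u v : NSG P -> freq u v -> P u -> P v.
Proof. by move=> HP H Pu; exact: (sg_eq HP Pu H). Qed.

Lemma lv_level g : level n g -> lv g. Proof. by move=> H; exists g; split => //; reflexivity. Qed.
Lemma lv_cat u v : lv u -> lv v -> lv (u ++ v).
Proof. move=> [u' [Hu Eu]] [v' [Hv Ev]]; exists (u' ++ v'); rewrite level_cat Hu Hv Eu Ev; split => //; reflexivity. Qed.
Lemma lv_winv u : lv u -> lv (winv u).
Proof. move=> [u' [Hu Eu]]; exists (winv u'); rewrite level_winv Eu; split => //; reflexivity. Qed.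
Lemma lv_freq u v : lv u -> freq u v -> lv v.
Proof. move=> [u' [Hu Eu]] E; exists u'; split => //; by rewrite -E. Qed.
Lemma lv_K m u : lv u -> lv (K m u).
Proof. move=> [u' [Hu Eu]]; exists (K m u'); split; [exact: level_K | by rewrite /K Eu]. Qed.

Lemma gen_sub (S P : word -> Prop) w : NSG P -> (forall s, S s -> P s) -> gen S w -> P w.
Proof.
move=> HP HS; elim=> {w} [|w|u v _ Hu _ Hv|u _ Hu|u v _ Hu E].
- exact: sg_nil.
- exact: HS.
- exact: sg_cat.
- exact: sg_inv.
- exact: sg_eq E.
Qed.

Lemma gen_lv (S : word -> Prop) w : (forall s, S s -> lv s) -> gen S w -> lv w.
Proof.
move=> HS; elim=> {w} [|w|u v _ Hu _ Hv|u _ Hu|u v _ Hu E].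
- exact: lv_level.
- exact: HS.
- exact: lv_cat.
- exact: lv_winv.
- exact: lv_freq E.
Qed.

Lemma gen_NSG (S : word -> Prop) :
  (forall s g, S s -> level n g -> gen S (cj s g)) -> NSG (gen S).
Proof.
move=> HS; split.
- exact: gen_nil.
- exact: gen_mul.
- exact: gen_inv.
- exact: gen_eq.
- move=> u g Hu Hg; elim: Hu => {u} [|w Sw|u v _ Hu _ Hv|u _ Hu|u v _ Hu E].
  + apply: (gen_eq (gen_nil S)); rewrite /cj /=; symmetry; exact: winv_cat_l.
  + exact: HS.
  + apply: (gen_eq (gen_mul Hu Hv)); rewrite /cj; fgroup [:: u; v; g].
  + apply: (gen_eq (gen_inv Hu)); rewrite /cj; fgroup [:: u; g].
  + apply: (gen_eq Hu); rewrite /cj E; reflexivity.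
Qed.

Lemma cm_gen (P S Z : word -> Prop) h z : NSG P -> (forall s, S s -> lv s) ->
  (forall s z, S s -> Z z -> P (cm s z)) -> gen S h -> Z z -> P (cm h z).
Proof.
move=> HP HSl HS Hh Hz; elim: Hh => {h} [|w Sw|u v Gu Hu Gv Hv|u Gu Hu|u v _ Hu E].
- apply: (sg_eq HP (sg_nil HP)); rewrite /cm /=; symmetry; exact: winv_cat_l.
- exact: HS.
- apply: (sg_eq HP (sg_cat HP (sg_conj_lv HP Hu (gen_lv HSl Gv)) Hv)).
  rewrite /cm /cj; fgroup [:: u; v; z].
- apply: (sg_eq HP (sg_conj_lv HP (sg_inv HP Hu) (lv_winv (gen_lv HSl Gu)))).
  rewrite /cm /cj; fgroup [:: u; z].
- apply: (sg_eq HP Hu); rewrite /cm E; reflexivity.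
Qed.

Lemma K_cat m (u v : word) : K m (u ++ v) = K m u ++ K m v. Proof. exact: lift_cat. Qed.
Lemma K_winv m (u : word) : K m (winv u) = winv (K m u). Proof. exact: lift_winv. Qed.
Global Instance K_Proper m : Proper (@freq J ==> @freq J) (K m).
Proof. exact: lift_Proper. Qed.

Lemma MC (P S : word -> Prop) m g : NSG P -> (forall s, S s -> lv s) ->
  (forall s, S s -> P (s ++ winv (K m s))) -> gen S g -> P (g ++ winv (K m g)).
Proof.
move=> HP HSl HS Hg; elim: Hg => {g} [|w Sw|u v Gu Hu Gv Hv|u Gu Hu|u v _ Hu E].
- exact: sg_nil.
- exact: HS.
- have Ku := lv_K m (gen_lv HSl Gu).
  apply: (sg_eq HP (sg_cat HP Hu (sg_conj_lv HP Hv (lv_winv Ku)))).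
  rewrite K_cat /cj winvK; set a := K m u; set b := K m v; fgroup [:: u; v; a; b].
- have Ku := lv_K m (gen_lv HSl Gu).
  apply: (sg_eq HP (sg_conj_lv HP (sg_inv HP Hu) Ku)).
  rewrite K_winv /cj winvK; set a := K m u; fgroup [:: u; a].
- apply: (sg_eq HP Hu); rewrite E; reflexivity.
Qed.

Lemma K_gen (P S : word -> Prop) m w : NSG P -> (forall s, S s -> P (K m s)) ->
  gen S w -> P (K m w).
Proof.
move=> HP HS; elim=> {w} [|w|u v _ Hu _ Hv|u _ Hu|u v _ Hu E].
- exact: sg_nil.
- exact: HS.
- rewrite K_cat; exact: sg_cat.
- rewrite K_winv; exact: sg_inv.
- apply: (sg_eq HP Hu); rewrite E; reflexivity.
Qed.

Lemma Rgen_NSG i j : NSG (Rgen n i j).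
Proof.
apply: gen_NSG => s g [g' [a [Hg' ->]]] Hg.
apply: gen_in; exists (g' ++ g), a; split; first by rewrite level_cat Hg' Hg.
by rewrite /cj winv_cat -!catA.
Qed.

Lemma Rgen_lv i j w : valid_pair n (i, j) -> Rgen n i j w -> lv w.
Proof.
move=> Hv; apply: gen_lv => s [g [a [Hg ->]]]; apply: lv_level.
by rewrite level_cat level_winv Hg /= Hg andbT.
Qed.

Lemma comm_NSG (H K' : word -> Prop) : NSG H -> NSG K' -> NSG (comm H K').
Proof.
move=> HH HK; apply: gen_NSG => s g [h [k [Hh [Hk ->]]]] Hg.
apply: (gen_eq (u := cm (cj h g) (cj k g))).
  apply: gen_in; exists (cj h g), (cj k g); split; first exact: (sg_conj HH Hh Hg).
  by split; first exact: (sg_conj HK Hk Hg).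
rewrite /cm /cj; fgroup [:: h; k; g].
Qed.

Lemma comm_lv (H K' : word -> Prop) w : (forall h, H h -> lv h) -> (forall k, K' k -> lv k) ->
  comm H K' w -> lv w.
Proof.
move=> H1 H2; apply: gen_lv => s [h [k [Hh [Hk ->]]]].
repeat apply: lv_cat; try apply: lv_winv; auto.
Qed.

Lemma iterC_rcons p s e :
  @iterC J n p (rcons s e) = comm (iterC n p s) (Rgen n e.1 e.2).
Proof. by rewrite /iterC foldl_rcons. Qed.

Lemma iterC_NSG p s : NSG (@iterC J n p s).
Proof.
elim/last_ind: s => [|s e IH]; first exact: Rgen_NSG.
rewrite iterC_rcons; apply: comm_NSG => //; exact: Rgen_NSG.
Qed.

Lemma iterC_lv p s w : all (valid_pair n) (p :: s) -> @iterC J n p s w -> lv w.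
Proof.
elim/last_ind: s w => [|s e IH] w.
  move=> Hp; have Hp' : valid_pair n p by move: Hp; rewrite /= andbT.
  by case: p Hp' {Hp} => i j Hp'; exact: Rgen_lv.
move=> Hv; have /andP [He Hs] : valid_pair n e && all (valid_pair n) (p :: s).
  by move: Hv; rewrite -rcons_cons all_rcons.
rewrite iterC_rcons; apply: comm_lv.
  by move=> h; apply: IH.
by clear Hv; case: e He IH => i j He _ k; exact: (Rgen_lv He).
Qed.

Definition vs (E : seq (nat * nat)) := flatten [seq [:: q.1; q.2] | q <- E].

Definition RTgen (T : seq nat) (w : word) :=
  exists (p : nat * nat) (s : seq (nat * nat)),
    all (valid_pair n) (p :: s) /\ {subset T <= vs (p :: s)} /\ iterC n p s w.

Lemma RT_def T w : RT n T w = gen (RTgen T) w. Proof. by []. Qed.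

Lemma RT_NSG T : NSG (@RT J n T).
Proof.
apply: gen_NSG => w g [p [s [Hv [Hsub Hi]]]] Hg.
apply: gen_in; exists p, s; do 2 split => //.
exact: (sg_conj (iterC_NSG p s) Hi Hg).
Qed.

Lemma RTgen_lv T w : RTgen T w -> lv w.
Proof. by move=> [p [s [Hv [_ Hi]]]]; exact: iterC_lv Hi. Qed.

Lemma RT_lv T w : @RT J n T w -> lv w.
Proof. apply: gen_lv; exact: RTgen_lv. Qed.

Lemma RT_mono T T' w : {subset T <= T'} -> @RT J n T' w -> RT n T w.
Proof.
move=> HT; apply: gen_sub; first exact: RT_NSG.
move=> s [p [q [Hv [Hsub Hi]]]]; apply: gen_in; exists p, q; do 2 split => //.
by move=> x /HT /Hsub.
Qed.

Lemma RT_gen T p s w : all (valid_pair n) (p :: s) -> {subset T <= vs (p :: s)} ->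
  iterC n p s w -> @RT J n T w.
Proof. by move=> Hv Hs Hi; apply: gen_in; exists p, s. Qed.

End Sub.
Arguments Rgen_NSG {J} n i j.
Arguments iterC_NSG {J} n p s.
Arguments RT_NSG {J} n T.

Section Main.
Variable J : Type.
Local Notation word := (word J).
Local Notation letter := (letter J).
Variable n : nat.

Lemma vs_rcons p s e : vs (p :: rcons s e) = vs (p :: s) ++ [:: e.1; e.2].
Proof. by rewrite /vs -rcons_cons map_rcons -cats1 flatten_cat. Qed.

Lemma valid_rcons p s e :
  all (valid_pair n) (p :: rcons s e) = all (valid_pair n) (p :: s) && valid_pair n e.
Proof. by rewrite -rcons_cons all_rcons andbC. Qed.

Lemma K_letter_touch m b i j (a : J) (g : word) : touch m (i, j) ->
  K m ((b, (i, j, a)) :: g) = K m g.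
Proof. by move=> H; rewrite /K lift_cons /kill /= H. Qed.

Lemma K_letter_notouch m b i j (a : J) (g : word) : ~~ touch m (i, j) ->
  K m ((b, (i, j, a)) :: g) = (b, (i, j, a)) :: K m g.
Proof. by move=> H; rewrite /K lift_cons /kill /= (negbTE H). Qed.

Definition Pk k (w : word) := freq (K k w) [::].

Lemma Pk_NSG k : NSG n (Pk k).
Proof.
split; rewrite /Pk.
- by [].
- by move=> u v Hu Hv; rewrite K_cat Hu Hv.
- by move=> u Hu; rewrite K_winv Hu.
- by move=> u v Hu E; rewrite -E.
- move=> u g Hu _; rewrite /cj !K_cat K_winv Hu /=; exact: winv_cat_l.
Qed.

Lemma Rgen_kill k i j w : touch k (i, j) -> Rgen n i j w -> Pk k w.
Proof.
move=> Ht; apply: gen_sub; first exact: Pk_NSG.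
move=> s [g [a [Hg ->]]]; rewrite /Pk K_cat K_winv K_letter_touch //; exact: winv_cat_l.
Qed.

Lemma iterC_kill k p s w : k \in vs (p :: s) -> iterC n p s w -> Pk k w.
Proof.
elim/last_ind: s w => [|s e IH] w.
  rewrite /vs /= !inE => Hk; apply: Rgen_kill; rewrite /touch /=.
  by case/orP: Hk => /eqP ->; rewrite eqxx ?orbT.
rewrite vs_rcons mem_cat iterC_rcons => Hk.
apply: gen_sub; first exact: Pk_NSG.
move=> x [h [k' [Hh [Hk' ->]]]]; rewrite /Pk !K_cat !K_winv.
case/orP: Hk => Hk.
- rewrite (IH _ Hk Hh) /=; exact: winv_cat_l.
- have := Rgen_kill (k := k) _ Hk'; rewrite /Pk => ->; last first.
    rewrite /touch /=; move: Hk; rewrite !inE.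
    by case/orP => /eqP ->; rewrite eqxx ?orbT.
  rewrite /= cats0; exact: winv_cat_l.
Qed.

Lemma easy T (w : word) k : RT n T w -> k \in T -> freq (K k w) [::].
Proof.
move=> HR Hk; apply: (gen_sub (Pk_NSG k) _ HR).
move=> s [p [q [_ [Hs Hi]]]]; exact: iterC_kill (Hs _ Hk) Hi.
Qed.

End Main.

Section Hard.
Variable J : Type.
Local Notation word := (word J).
Local Notation letter := (letter J).
Variable n : nat.
Variable m : nat.

Lemma Rgen_lv' (e : nat * nat) (k : word) : valid_pair n e -> Rgen n e.1 e.2 k -> lv n k.
Proof. by move=> He Hk; exact: (Rgen_lv (i := e.1) (j := e.2) He Hk). Qed.

Lemma subset_catlr (A B C : seq nat) : {subset A <= C} -> {subset A ++ B <= C ++ B}.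
Proof. by move=> H x; rewrite !mem_cat => /orP [/H ->|->] //; rewrite orbT. Qed.
Lemma subset_prefix (A B : seq nat) : {subset A <= A ++ B}.
Proof. by move=> x; rewrite mem_cat => ->. Qed.
Lemma sub_cons (x : nat) (A B : seq nat) : x \in B -> {subset A <= B} -> {subset x :: A <= B}.
Proof. by move=> Hx H y; rewrite inE => /orP [/eqP ->|/H]. Qed.
Lemma touch_mem x e : touch x e -> x \in [:: e.1; e.2].
Proof. by rewrite /touch !inE => /orP [/eqP ->|/eqP ->]; rewrite eqxx ?orbT. Qed.

Lemma id1 (a b A1 B1 : word) :
  freq (cm a b ++ winv (cm A1 B1))
       (cj (cm (a ++ winv A1) b) A1 ++ cj (cj (cm A1 (b ++ winv B1)) B1) (winv (cm A1 B1))).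
Proof. rewrite /cm /cj. fgroup [:: a; b; A1; B1]. Qed.

Lemma hw2 (x y z : word) :
  freq (cm (cm y x) z)
   (cj (winv (cj (cm (cm (winv x) (winv z)) y) z ++ cj (cm (cm z (winv y)) (winv x)) y)) x).
Proof. rewrite /cm /cj. fgroup [:: x; y; z]. Qed.

Lemma cm_swap (a b : word) : freq (cm a b) (winv (cm b a)).
Proof. rewrite /cm; fgroup [:: a; b]. Qed.

Lemma cm_inv2 (x z : word) : freq (cm (winv x) (winv z)) (winv (cm (winv z) (winv x))).
Proof. rewrite /cm; fgroup [:: x; z]. Qed.

Definition NmS (w : word) := exists (e : nat * nat) g a,
  valid_pair n e /\ touch m e /\ level n g /\ w = winv g ++ (true, (e.1, e.2, a)) :: g.
Definition Nm := gen NmS.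

Lemma Nm_NSG : NSG n Nm.
Proof.
apply: gen_NSG => s g [e [g' [a [He [Ht [Hg' ->]]]]]] Hg.
apply: gen_in; exists e, (g' ++ g), a; do 3 split => //; first by rewrite level_cat Hg' Hg.
by rewrite /cj winv_cat -!catA.
Qed.

Lemma NmS_lv w : NmS w -> lv n w.
Proof.
move=> [e [g [a [He [_ [Hg ->]]]]]]; apply: lv_level.
by rewrite level_cat level_winv Hg /= Hg andbT; case: e He.
Qed.

Lemma L1 (g : word) : level n g -> Nm (g ++ winv (K m g)).
Proof.
elim: g => [_|[b [[i j] a]] g IH]; first exact: gen_nil.
move=> /andP [Hx Hg]; have Hv : valid_pair n (i, j) := Hx; clear Hx; have IHg := IH Hg.
have HX : Nm [:: (true, (i, j, a))] -> Nm [:: (b, (i, j, a))].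
  by case: b => // H; exact: (gen_inv H).
case: (boolP (touch m (i, j))) => Ht.
- rewrite K_letter_touch //.
  apply: (gen_mul (u := [:: (b, (i, j, a))])) IHg; apply: HX.
  by apply: gen_in; exists (i, j), [::], a.
- rewrite K_letter_notouch // winv_cons.
  have := sg_conj Nm_NSG IHg (g := [:: (~~ b, (i, j, a))]).
  rewrite /cj /winv /= negbK => H; apply: (sg_eq Nm_NSG (H _)); first by rewrite andbT.
  by rewrite -/(winv (K m g)) /= -catA.
Qed.

Definition MeS (e : nat * nat) (w : word) :=
  (touch m e /\ Rgen n e.1 e.2 w) \/
  exists e', valid_pair n e' /\ touch m e' /\ iterC n e' [:: e] w.
Definition Me e := gen (MeS e).

Lemma Me_NSG e : NSG n (Me e).
Proof.
apply: gen_NSG => s g [[Ht Hs]|[e' [He' [Ht Hs]]]] Hg; apply: gen_in.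
- by left; split => //; exact: (sg_conj (Rgen_NSG n _ _) Hs Hg).
- by right; exists e'; do 2 split => //; exact: (sg_conj (iterC_NSG n _ _) Hs Hg).
Qed.

Lemma MeS_lv e w : valid_pair n e -> MeS e w -> lv n w.
Proof.
move=> He [[_ Hs]|[e' [He' [_ Hs]]]].
- exact: (Rgen_lv' He Hs).
- by apply: (iterC_lv (p := e') (s := [:: e])) Hs; rewrite /= He He'.
Qed.

Lemma Rgen_letter_inv i j (a : J) : Rgen n i j (winv [:: (true, (i, j, a))]).
Proof. by apply: gen_inv; apply: gen_in; exists [::], a. Qed.

Lemma BL e b : valid_pair n e -> Rgen n e.1 e.2 b -> Me e (b ++ winv (K m b)).
Proof.
move=> He; apply: MC; first exact: Me_NSG.
  by move=> s Hs; case: e He Hs => i j He Hs; exact: (Rgen_lv He (gen_in Hs)).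
move=> s [g [a [Hg ->]]].
have Hs : Rgen n e.1 e.2 (winv g ++ (true, (e.1, e.2, a)) :: g).
  by apply: gen_in; exists g, a.
case: (boolP (touch m e)) => Ht.
- rewrite K_cat K_winv K_letter_touch; last by case: e Ht {Hs He}.
  apply: (sg_eq (Me_NSG e) (gen_in (_ : MeS e _))); first by left; split; first exact: Ht; exact: Hs.
  rewrite winv_cat winvK -!catA; set X := _ :: g.
  change (freq (winv g ++ X) (winv g ++ X ++ winv (K m g) ++ K m g)).
  by rewrite winv_cat_l cats0.
- rewrite K_cat K_winv K_letter_notouch; last by case: e Ht {Hs He}.
  set X := [:: (true, (e.1, e.2, a))]; set Kg := K m g.
  have HX : Rgen n e.1 e.2 (winv X) by exact: Rgen_letter_inv.
  have Hnu := L1 Hg.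
  have H1 : Me e (cm (g ++ winv Kg) (winv X)).
    apply: (cm_gen (S := NmS) (Z := Rgen n e.1 e.2)) Hnu HX.
    - exact: Me_NSG.
    - exact: NmS_lv.
    move=> s0 z [e' [g' [a' [He' [Ht' [Hg' ->]]]]]] Hz.
    apply: gen_in; right; exists e'; do 2 split => //.
    apply: gen_in; exists (winv g' ++ (true, (e'.1, e'.2, a')) :: g'), z; split; last by split.
    by apply: gen_in; exists g', a'.
  have H2 := sg_conj (Me_NSG e) H1 (level_K m Hg).
  apply: (sg_eq (Me_NSG e) H2).
  rewrite /cm /cj -/Kg; change ((true, (e.1, e.2, a)) :: g) with (X ++ g);
  change ((true, (e.1, e.2, a)) :: Kg) with (X ++ Kg).
  fgroup [:: g; Kg; X].
Qed.


Lemma K_Rgen i j (w : word) : Rgen n i j w -> Rgen n i j (K m w).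
Proof.
apply: K_gen; first exact: Rgen_NSG.
move=> s [g [a [Hg ->]]]; rewrite K_cat K_winv.
case: (boolP (touch m (i, j))) => Ht.
- rewrite K_letter_touch //; apply: (gen_eq (gen_nil _)); symmetry; exact: winv_cat_l.
- rewrite K_letter_notouch //; apply: gen_in; exists (K m g), a; split => //.
  exact: level_K.
Qed.

Lemma K_iterC p s (w : word) : iterC n p s w -> iterC n p s (K m w).
Proof.
elim/last_ind: s w => [|s e IH] w; first exact: K_Rgen.
rewrite iterC_rcons; apply: K_gen; first exact: comm_NSG (iterC_NSG n p s) (Rgen_NSG n _ _).
move=> x [h [k [Hh [Hk ->]]]]; rewrite !K_cat !K_winv.
apply: gen_in; exists (K m h), (K m k); split; first exact: IH.
by split; first exact: K_Rgen.
Qed.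

Lemma iterC_comm p s e (h k : word) : iterC n p s h -> Rgen n e.1 e.2 k ->
  iterC n p (rcons s e) (cm h k).
Proof. by move=> Hh Hk; rewrite iterC_rcons; apply: gen_in; exists h, k. Qed.

Lemma Q p s : all (valid_pair n) (p :: s) -> forall c, iterC n p s c ->
  RT n (m :: vs (p :: s)) (c ++ winv (K m c) : word).
Proof.
elim/last_ind: s => [|s e IH] Hv c Hc.
- have Hp : valid_pair n p by move: Hv; rewrite /= andbT.
  have := BL Hp Hc; apply: gen_sub; first exact: RT_NSG.
  move=> w [[Ht Hw]|[e' [He' [Ht Hw]]]].
  + apply: (RT_gen (p := p) (s := [::])) => //.
    move=> x; rewrite inE => /orP [/eqP ->|//].
    by move: Ht; rewrite /touch /vs /= !inE => /orP [/eqP ->|/eqP ->]; rewrite eqxx ?orbT.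
  + apply: (RT_gen (p := e') (s := [:: p])); first by rewrite /= He' Hp.
      move=> x; rewrite inE => /orP [/eqP ->|].
        by move: Ht; rewrite /touch /vs /= !inE => /orP [/eqP ->|/eqP ->]; rewrite eqxx ?orbT.
      by rewrite /vs /= !inE => ->; rewrite !orbT.
    exact: Hw.
- move: Hv; rewrite valid_rcons => /andP [Hv He].
  have IHs := IH Hv.
  set T' := m :: vs (p :: rcons s e).
  have HT := RT_NSG (J := J) n T'.
  have Hsub : {subset m :: vs (p :: s) <= T'}.
    by move=> x; rewrite /T' vs_rcons -cat_cons mem_cat => ->.
  have lvS : forall w : word, (fun w : word => exists h k : word, iterC n p s h /\ Rgen n e.1 e.2 k /\
                 w = winv h ++ winv k ++ h ++ k) w -> lv n w.
    move=> w /= [h [k [Hh [Hk ->]]]].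
    have lh := iterC_lv Hv Hh.
    have lk : lv n k by exact: (Rgen_lv' He Hk).
    by repeat apply: lv_cat; try apply: lv_winv.
  move: Hc; rewrite iterC_rcons => Hc.
  apply: (MC HT lvS) Hc.
  move=> w [a [b [Ha [Hb ->]]]].
  have la := iterC_lv Hv Ha.
  have lb : lv n b by exact: (Rgen_lv' He Hb).
  set A1 := K m a; set B1 := K m b.
  have lA1 : lv n A1 := lv_K m la.
  have lB1 : lv n B1 := lv_K m lb.
  have HA1 : iterC n p s A1 := K_iterC Ha.
  have E : K m (winv a ++ winv b ++ a ++ b) = cm A1 B1 by rewrite !K_cat !K_winv.
  rewrite E; apply: (sg_eq HT _ (freq_sym' (id1 a b A1 B1))).
  apply: (sg_cat HT).
  + apply: (sg_conj_lv HT) lA1.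
    apply: (cm_gen (S := RTgen n (m :: vs (p :: s))) (Z := Rgen n e.1 e.2)) (IHs a Ha) Hb.
    * exact: HT.
    * move=> x; exact: RTgen_lv.
    * move=> x z [p0 [s0 [Hv0 [Hs0 Hi0]]]] Hz.
      apply: (RT_gen (p := p0) (s := rcons s0 e)).
      - by rewrite valid_rcons Hv0 He.
      - by rewrite /T' vs_rcons -cat_cons vs_rcons; exact: subset_catlr Hs0.
      - exact: iterC_comm.
  + apply: (sg_conj_lv HT); last by apply: lv_winv; rewrite /cm;
      repeat apply: lv_cat; try apply: lv_winv.
    apply: (sg_conj_lv HT) lB1.
    have Hbeta := BL He Hb.
    apply: (sg_eq HT _ (freq_sym' (cm_swap A1 (b ++ winv B1)))).
    apply: (sg_inv HT).
    apply: (cm_gen (S := MeS e) (Z := iterC n p s)) Hbeta HA1.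
    * exact: HT.
    * move=> x; exact: MeS_lv He.
    * move=> g z [[Ht Hg]|[e' [He' [Ht Hg]]]] Hz.
      { apply: (sg_eq HT _ (freq_sym' (cm_swap g z))); apply: (sg_inv HT).
        apply: (RT_gen (p := p) (s := rcons s e)).
        - by rewrite valid_rcons Hv He.
        - apply: sub_cons => //; rewrite vs_rcons mem_cat (touch_mem Ht) orbT //.
        - exact: iterC_comm. }
      have lvC : forall w : word, (fun w : word => exists h k : word, Rgen n e'.1 e'.2 h /\ Rgen n e.1 e.2 k /\
                 w = winv h ++ winv k ++ h ++ k) w -> lv n w.
        move=> w1 /= [y [x [Hy [Hx ->]]]].
        have ly : lv n y by exact: (Rgen_lv' He' Hy).
        have lx : lv n x by exact: (Rgen_lv' He Hx).
        by repeat apply: lv_cat; try apply: lv_winv.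
      apply: (cm_gen (S := fun w : word => exists h k : word, Rgen n e'.1 e'.2 h /\ Rgen n e.1 e.2 k /\
                 w = winv h ++ winv k ++ h ++ k) (Z := iterC n p s)) Hg Hz.
      { exact: HT. }
      { exact: lvC. }
      move=> w1 z0 /= [y [x [Hy [Hx ->]]]] Hz0.
      have ly : lv n y by exact: (Rgen_lv' He' Hy).
      have lx : lv n x by exact: (Rgen_lv' He Hx).
      have lz : lv n z0 := iterC_lv Hv Hz0.
      change (RT n T' (cm (cm y x) z0)).
      apply: (sg_eq HT _ (freq_sym' (hw2 x y z0))).
      apply: (sg_conj_lv HT) lx; apply: (sg_inv HT); apply: (sg_cat HT).
      { apply: (sg_conj_lv HT) lz.
        apply: (RT_gen (p := p) (s := rcons (rcons s e) e')).
        - by rewrite !valid_rcons Hv He He'.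
        - apply: sub_cons.
            by rewrite vs_rcons mem_cat (touch_mem Ht) orbT.
          rewrite [vs (p :: rcons (rcons s e) e')]vs_rcons; exact: subset_prefix.
        - apply: iterC_comm => //.
          apply: (sg_eq (iterC_NSG n p (rcons s e)) _ (freq_sym' (cm_inv2 x z0))).
          apply: (sg_inv (iterC_NSG n p (rcons s e))); apply: iterC_comm.
          + exact: (sg_inv (iterC_NSG n p s)).
          + exact: (sg_inv (Rgen_NSG n _ _)). }
      { apply: (sg_conj_lv HT) ly.
        apply: (RT_gen (p := p) (s := rcons (rcons s e') e)).
        - by rewrite !valid_rcons Hv He He'.
        - apply: sub_cons.
            by rewrite !vs_rcons !mem_cat (touch_mem Ht) orbT.
          rewrite !vs_rcons; apply: subset_catlr; exact: subset_prefix.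
        - apply: iterC_comm; last exact: (sg_inv (Rgen_NSG n _ _)).
          apply: iterC_comm => //; exact: (sg_inv (Rgen_NSG n _ _)). }
Qed.

End Hard.

Section Final.
Variable J : Type.
Local Notation word := (word J).
Variable n : nat.

Lemma RT_nil (w : word) : level n w -> RT n [::] w.
Proof.
elim: w => [_|[b [[i j] a]] w IH /andP [Hx Hw]]; first exact: gen_nil.
have Hv : valid_pair n (i, j) := Hx.
apply: (gen_mul (u := [:: (b, (i, j, a))])); last exact: IH.
have H1 : RT n [::] [:: (true, (i, j, a))].
  apply: (RT_gen (p := (i, j)) (s := [::])) => //; first by rewrite /= Hv.
  by apply: gen_in; exists [::], a.
case: b {Hx} => //; exact: (gen_inv H1).
Qed.

Lemma hard S (w : word) : level n w -> (forall k, k \in S -> freq (K k w) [::]) -> RT n S w.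
Proof.
elim: S w => [|m S IH] w Hw Hk; first exact: RT_nil.
have HS : RT n S w by apply: IH => // k Hk'; apply: Hk; rewrite inE Hk' orbT.
have H : RT n (m :: S) (w ++ winv (K m w)).
  apply: (MC (RT_NSG n (m :: S)) (@RTgen_lv J n S)) HS.
  move=> s [p [q [Hv [Hsub Hi]]]].
  apply: (RT_mono (T' := m :: vs (p :: q))); last exact: (Q m Hv Hi).
  by move=> x; rewrite in_cons => /orP [/eqP ->|/Hsub Hx]; rewrite in_cons ?eqxx ?Hx ?orbT.
apply: (sg_eq (RT_NSG n (m :: S)) H).
by rewrite (Hk m (mem_head _ _)) /= cats0.
Qed.

Lemma RT_iff S (w : word) : level n w ->
  ((forall k, k \in S -> freq (K k w) [::]) <-> RT n S w).
Proof.
move=> Hw; split; first exact: hard.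
move=> HR k Hk; exact: easy HR Hk.
Qed.

End Final.

Theorem lemma3p5 (J : Type) (n : nat) : 1 <= n ->
  (forall w : word J, level n w -> (MooreN n w <-> RT n (iota 2 n) w)) /\
  (forall w : word J, level n w -> (MooreZ n w <-> RT n (iota 1 n.+1) w)) /\
  (forall w : word J, level n w ->
     (MooreB n w <-> MooreZ n w) /\ (MooreZ n w <-> RT n (iota 1 n.+1) w)).
Proof.
move=> _.
have HZ : forall w : word J, level n w -> (MooreZ n w <-> RT n (iota 1 n.+1) w).
  by move=> w Hw; rewrite (MooreZ_iff Hw); exact: RT_iff.
split; first by move=> w Hw; rewrite (MooreN_iff Hw); exact: RT_iff.
split => // w Hw; split; [exact: MooreB_iff | exact: HZ].
Qed.
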